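(* Let $1<p,q<\infty$, $r>1$, and $X=\bigoplus_{\ell_p}\ell_q^n$. Let $F:X\to\mathbb{R}$ be uniformly $H^r$-smooth. For each $n$ let $F_n=F\circ i_n\circ\pi_n:\ell_q\to\mathbb{R}$. Then there is a subsequence $(F_{n_j})_j$ of $(F_n)_n$ which converges pointwise on $\ell_q$ to a uniformly $H^r$-smooth function $F^*:\ell_q\to\mathbb{R}$.
   Context: $\bigoplus_{\ell_p}\ell_q^n$ is the space of sequences $x=(x_n)_{n\ge1}$ with $x_n\in\ell_q^n$ and $\|x\|=(\sum_n\|x_n\|_q^p)^{1/p}<\infty$. $\pi_n:\ell_q\to\ell_q^n$ is the projection onto the first $n$ coordinates, and $i_n:\ell_q^n\to X$ is the isometric inclusion of $\ell_q^n$ as the $n$-th summand of $X$. For real $s>1$, with $k$ the largest integer strictly less than $s$, $g$ is uniformly $H^s$-smooth if it is $C^k$ and there is $M>0$ with $\|g^{(k)}(y)-g^{(k)}(z)\|\le M\|y-z\|^{s-k}$ for all $y,z$. *)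

(* Defs.v *)
From Stdlib Require Import Reals.
From Coquelicot Require Import Coquelicot.
Open Scope R_scope.

(* Power with real exponent, with the convention 0^a = 0 (used only for a > 0). *)
Definition pw (x a : R) : R := if Rlt_dec 0 x then Rpower x a else 0.

Fixpoint sumR (n : nat) (f : nat -> R) : R :=
  match n with O => 0 | S m => sumR m f + f m end.
Fixpoint prodR (n : nat) (f : nat -> R) : R :=
  match n with O => 1 | S m => prodR m f * f m end.

Definition scons {V : Type} (h : V) (hs : nat -> V) : nat -> V :=
  fun i => match i with O => h | S i' => hs i' end.
Definition supd {V : Type} (hs : nat -> V) (i : nat) (v : V) : nat -> V :=
  fun m => if Nat.eqb m i then v else hs m.

(* Generic uniform H^s-smoothness of a real function on a real normed
   space, presented concretely as a subset [mem] of an ambient type [V]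
   closed under [add] and [scal], with norm [nrm].                      *)
Section Smooth.
Variables (V : Type) (mem : V -> Prop) (add : V -> V -> V)
          (scal : R -> V -> V) (nrm : V -> R).

Definition args_in (j : nat) (hs : nat -> V) : Prop :=
  forall i, (i < j)%nat -> mem (hs i).

(* T (applied to the first j arguments of hs) is a bounded j-linear form *)
Definition bounded_multilinear (j : nat) (T : (nat -> V) -> R) : Prop :=
  (forall hs hs', (forall i, (i < j)%nat -> hs i = hs' i) -> T hs = T hs') /\
  (forall hs i u v, args_in j hs -> (i < j)%nat -> mem u -> mem v ->
      T (supd hs i (add u v)) = T (supd hs i u) + T (supd hs i v)) /\
  (forall hs i (a : R) u, args_in j hs -> (i < j)%nat -> mem u ->
      T (supd hs i (scal a u)) = a * T (supd hs i u)) /\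
  (exists C : R, forall hs, args_in j hs ->
      Rabs (T hs) <= C * prodR j (fun i => nrm (hs i))).

(* D is a family of successive Frechet derivatives of g up to order k:
   D 0 = g, each D j x is a bounded j-linear form, and for j < k,
   D (j+1) x is the Frechet derivative of D j at x (in operator norm):
   D (j+1) x (h, h_1, ..., h_j) is the derivative in direction h. *)
Definition frechet_derivatives (k : nat) (g : V -> R)
    (D : nat -> V -> (nat -> V) -> R) : Prop :=
  (forall x hs, mem x -> D O x hs = g x) /\
  (forall j x, (j <= k)%nat -> mem x -> bounded_multilinear j (D j x)) /\
  (forall j x, (j < k)%nat -> mem x ->
     forall eps : R, 0 < eps -> exists delta : R, 0 < delta /\
       forall h, mem h -> nrm h < delta -> forall hs, args_in j hs ->
         Rabs (D j (add x h) hs - D j x hs - D (S j) x (scons h hs))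
           <= eps * nrm h * prodR j (fun i => nrm (hs i))).

(* g is uniformly H^s-smooth: with k the largest integer strictly less
   than s, g is C^k and its k-th derivative is (s-k)-Holder:
   || D^k g(y) - D^k g(z) || <= M || y - z ||^(s-k)  (operator norm,
   written out as an inequality for all arguments).  The Holder bound
   implies the continuity of D^k g, so g is indeed C^k. *)
Definition unif_Hs_smooth (s : R) (g : V -> R) : Prop :=
  exists (k : nat) (D : nat -> V -> (nat -> V) -> R) (M : R),
    INR k < s <= INR (S k) /\
    frechet_derivatives k g D /\
    0 < M /\
    (forall y z hs, mem y -> mem z -> args_in k hs ->
       Rabs (D k y hs - D k z hs)
         <= M * pw (nrm (add y (scal (-1) z))) (s - INR k)
              * prodR k (fun i => nrm (hs i))).
End Smooth.

Definition lq_mem (q : R) (x : nat -> R) : Prop :=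
  ex_series (fun i => pw (Rabs (x i)) q).
Definition lq_norm (q : R) (x : nat -> R) : R :=
  pw (Series (fun i => pw (Rabs (x i)) q)) (1 / q).
Definition seq_add (x y : nat -> R) : nat -> R := fun i => x i + y i.
Definition seq_scal (a : R) (x : nat -> R) : nat -> R := fun i => a * x i.

(* An element is x : nat -> nat -> R,
   where x n is the n-th block, an element of l_q^n, i.e. only the
   coordinates x n 0, ..., x n (n-1) may be nonzero (block 0 is the
   zero-dimensional space, so effectively blocks are indexed by n >= 1). *)
Definition lqn_norm (q : R) (n : nat) (v : nat -> R) : R :=
  pw (sumR n (fun i => pw (Rabs (v i)) q)) (1 / q).
Definition X_mem (p q : R) (x : nat -> nat -> R) : Prop :=
  (forall n i, (n <= i)%nat -> x n i = 0) /\
  ex_series (fun n => pw (lqn_norm q n (x n)) p).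
Definition X_norm (p q : R) (x : nat -> nat -> R) : R :=
  pw (Series (fun n => pw (lqn_norm q n (x n)) p)) (1 / p).
Definition X_add (x y : nat -> nat -> R) : nat -> nat -> R :=
  fun n i => x n i + y n i.
Definition X_scal (a : R) (x : nat -> nat -> R) : nat -> nat -> R :=
  fun n i => a * x n i.

(* i_n (pi_n x): the first n coordinates of x put in the n-th block. *)
Definition in_pin (n : nat) (x : nat -> R) : nat -> nat -> R :=
  fun m i => if andb (Nat.eqb m n) (Nat.ltb i n) then x i else 0.

Definition smooth_X (p q r : R) (F : (nat -> nat -> R) -> R) : Prop :=
  unif_Hs_smooth (nat -> nat -> R) (X_mem p q) X_add X_scal (X_norm p q) r F.
Definition smooth_lq (q r : R) (G : (nat -> R) -> R) : Prop :=
  unif_Hs_smooth (nat -> R) (lq_mem q) seq_add seq_scal (lq_norm q) r G.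

(* Main.v *)
Require Import Defs.
From Stdlib Require Import Reals.
From Coquelicot Require Import Coquelicot.
From Stdlib Require Import Lra Lia ZArith Cantor FunctionalExtensionality IndefiniteDescription.
Open Scope R_scope.

Lemma pw_nonneg x a : 0 <= pw x a.
Proof. unfold pw; destruct Rlt_dec; [left; unfold Rpower; apply exp_pos|lra]. Qed.

Lemma pw_pos x a : 0 < x -> pw x a = Rpower x a.
Proof. intros H; unfold pw; destruct Rlt_dec; [reflexivity|lra]. Qed.

Lemma pw_0 a : pw 0 a = 0.
Proof. unfold pw; destruct Rlt_dec; [lra|reflexivity]. Qed.

Lemma pw_gt0 x a : 0 < x -> 0 < pw x a.
Proof. intros H; rewrite pw_pos; [unfold Rpower; apply exp_pos|auto]. Qed.

Lemma pw_le x y a : 0 < a -> 0 <= x <= y -> pw x a <= pw y a.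
Proof.
  intros Ha [Hx Hxy]. destruct Hx as [Hx|Hx].
  - rewrite !pw_pos by lra. apply Rle_Rpower_l; lra.
  - subst. rewrite pw_0. apply pw_nonneg.
Qed.

Lemma pw_mult x y a : 0 <= x -> 0 <= y -> pw (x*y) a = pw x a * pw y a.
Proof.
  intros Hx Hy. destruct Hx as [Hx|Hx]; [destruct Hy as [Hy|Hy]|].
  - rewrite !pw_pos; try nra. rewrite Rpower_mult_distr; auto.
  - subst. rewrite Rmult_0_r, !pw_0; ring.
  - subst. rewrite Rmult_0_l, !pw_0; ring.
Qed.

Lemma pw_pw x a b : 0 <= x -> pw (pw x a) b = pw x (a*b).
Proof.
  intros [Hx|Hx].
  - rewrite (pw_pos x) by auto. rewrite pw_pos. rewrite pw_pos by auto. apply Rpower_mult.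
    unfold Rpower; apply exp_pos.
  - subst. rewrite !pw_0; reflexivity.
Qed.

Lemma pw_1 x : 0 <= x -> pw x 1 = x.
Proof. intros [Hx|Hx]. rewrite pw_pos by auto. apply Rpower_1; auto. subst; apply pw_0. Qed.

Lemma pw_inv x a : 0 <= x -> a <> 0 -> pw (pw x a) (1/a) = x.
Proof. intros Hx Ha. rewrite pw_pw by auto. replace (a*(1/a)) with 1 by (field; auto). apply pw_1; auto. Qed.

Lemma pw_inv' x a : 0 <= x -> a <> 0 -> pw (pw x (1/a)) a = x.
Proof. intros Hx Ha. rewrite pw_pw by auto. replace ((1/a)*a) with 1 by (field; auto). apply pw_1; auto. Qed.

Lemma pw_le_id x a : 0 <= x <= 1 -> 1 <= a -> pw x a <= x.
Proof.
  intros [[Hx|Hx] H1] Ha.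
  - rewrite pw_pos by auto. unfold Rpower.
    assert (ln x <= 0). { rewrite <- ln_1. apply ln_le; lra. }
    rewrite <- (exp_ln x) at 2 by auto. apply exp_le_3 || (destruct (Rle_lt_or_eq_dec (a * ln x) (ln x)) as [h|h]; [nra| left; apply exp_increasing; auto | rewrite h; lra]).
  - subst. rewrite pw_0; lra.
Qed.

Lemma sumR_nonneg n f : (forall i, (i < n)%nat -> 0 <= f i) -> 0 <= sumR n f.
Proof. induction n; simpl; intros H; [lra|]. assert (0 <= f n) by (apply H; lia).
  assert (0 <= sumR n f) by (apply IHn; intros; apply H; lia). lra. Qed.

Lemma sumR_le n f g : (forall i, (i < n)%nat -> f i <= g i) -> sumR n f <= sumR n g.
Proof. induction n; simpl; intros H; [lra|]. assert (f n <= g n) by (apply H; lia).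
  assert (sumR n f <= sumR n g) by (apply IHn; intros; apply H; lia). lra. Qed.

Lemma sumR_scal n c f : sumR n (fun i => c * f i) = c * sumR n f.
Proof. induction n; simpl; [ring|]. rewrite IHn; ring. Qed.

Lemma sumR_plus n f g : sumR n (fun i => f i + g i) = sumR n f + sumR n g.
Proof. induction n; simpl; [ring|]. rewrite IHn; ring. Qed.

Lemma sumR_ext n f g : (forall i, (i < n)%nat -> f i = g i) -> sumR n f = sumR n g.
Proof. induction n; simpl; intros H; [auto|]. rewrite IHn, H; auto; intros; apply H; lia. Qed.

Lemma sumR_mono n m f : (forall i, 0 <= f i) -> (m <= n)%nat -> sumR m f <= sumR n f.
Proof. intros H Hmn. induction Hmn; [lra|]. simpl. specialize (H m0). lra. Qed.

Lemma sumR_sum_n n f : sumR (S n) f = sum_n f n.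
Proof. induction n. simpl. rewrite sum_O. ring. rewrite sum_Sn. change (sumR (S (S n)) f) with (sumR (S n) f + f (S n)).
  rewrite IHn. reflexivity. Qed.

Lemma sumR_zero_from n N f : (forall i, 0 <= f i) -> (forall i, (N <= i)%nat -> f i = 0) -> sumR n f <= sumR N f.
Proof. intros H0 H. induction n; simpl. apply sumR_nonneg; auto.
  destruct (Nat.le_gt_cases N n). rewrite H by auto. lra. apply (sumR_mono N (S n) f); auto; lia. Qed.

Lemma prodR_nonneg n f : (forall i, (i < n)%nat -> 0 <= f i) -> 0 <= prodR n f.
Proof. induction n; simpl; intros H; [lra|]. apply Rmult_le_pos. apply IHn; intros; apply H; lia. apply H; lia. Qed.

Lemma prodR_le n f g : (forall i, (i < n)%nat -> 0 <= f i <= g i) -> prodR n f <= prodR n g.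
Proof. induction n; simpl; intros H; [lra|]. apply Rmult_le_compat.
  apply prodR_nonneg; intros; apply H; lia. apply H; lia.
  apply IHn; intros; apply H; lia. apply H; lia. Qed.

Lemma prodR_S n g : prodR (S n) g = g O * prodR n (fun i => g (S i)).
Proof. induction n. simpl; ring. change (prodR (S (S n)) g) with (prodR (S n) g * g (S n)).
  rewrite IHn. simpl. ring. Qed.

Lemma prodR_scons {V} (f : V -> R) n h hs :
  prodR (S n) (fun i => f (scons h hs i)) = f h * prodR n (fun i => f (hs i)).
Proof. rewrite prodR_S. reflexivity. Qed.

Lemma prodR_ext n f g : (forall i, (i < n)%nat -> f i = g i) -> prodR n f = prodR n g.
Proof. induction n; simpl; intros H; [auto|]. rewrite IHn, H; auto; intros; apply H; lia. Qed.

Lemma pw_add_le q u v : 0 < q -> pw (Rabs (u+v)) q <= pw 2 q * (pw (Rabs u) q + pw (Rabs v) q).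
Proof.
  intros Hq. set (m := Rmax (Rabs u) (Rabs v)).
  assert (Hm : 0 <= m) by (unfold m; apply Rle_trans with (Rabs u); [apply Rabs_pos|apply Rmax_l]).
  assert (H1 : Rabs (u+v) <= 2 * m).
  { apply Rle_trans with (Rabs u + Rabs v). apply Rabs_triang.
    unfold m; pose proof (Rmax_l (Rabs u) (Rabs v)); pose proof (Rmax_r (Rabs u) (Rabs v)); lra. }
  apply Rle_trans with (pw (2*m) q). apply pw_le; auto. split; [apply Rabs_pos|auto].
  rewrite pw_mult by lra. apply Rmult_le_compat_l. apply pw_nonneg.
  pose proof (pw_nonneg (Rabs u) q); pose proof (pw_nonneg (Rabs v) q).
  unfold m; destruct (Rle_dec (Rabs u) (Rabs v)).
  rewrite Rmax_right by auto; lra. rewrite Rmax_left by lra; lra.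
Qed.

Lemma pw_superadd a b q : 0 <= a -> 0 <= b -> 1 <= q -> pw a q + pw b q <= pw (a+b) q.
Proof.
  intros Ha Hb Hq. destruct (Req_dec (a+b) 0) as [H0|H0].
  { assert (a = 0) by lra. assert (b = 0) by lra. subst. rewrite Rplus_0_r, !pw_0; lra. }
  set (s := a+b). assert (Hs : 0 < s) by (unfold s; lra).
  assert (Ea : a = (a/s)*s) by (field; lra). assert (Eb : b = (b/s)*s) by (field; lra).
  assert (Ha' : 0 <= a/s <= 1). { split. apply Rdiv_le_0_compat; lra. apply Rmult_le_reg_r with s; auto. unfold Rdiv. rewrite Rmult_assoc, Rinv_l; unfold s in *; lra. }
  assert (Hb' : 0 <= b/s <= 1). { split. apply Rdiv_le_0_compat; lra. apply Rmult_le_reg_r with s; auto. unfold Rdiv. rewrite Rmult_assoc, Rinv_l; unfold s in *; lra. }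
  rewrite Ea at 1. rewrite Eb at 1. rewrite !pw_mult by lra.
  pose proof (pw_le_id (a/s) q Ha' Hq). pose proof (pw_le_id (b/s) q Hb' Hq).
  assert (Hab: a/s + b/s = 1) by (unfold s; field; lra).
  pose proof (pw_nonneg s q). nra.
Qed.

Section NU.
Variable q : R.
Hypothesis Hq : 1 < q.

Lemma lqn_nonneg n x : 0 <= lqn_norm q n x.
Proof. apply pw_nonneg. Qed.

Lemma sumR_pw_nonneg n x : 0 <= sumR n (fun i => pw (Rabs (x i)) q).
Proof. apply sumR_nonneg; intros; apply pw_nonneg. Qed.

Lemma lqn_pow n x : pw (lqn_norm q n x) q = sumR n (fun i => pw (Rabs (x i)) q).
Proof. unfold lqn_norm. apply pw_inv'. apply sumR_pw_nonneg. lra. Qed.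

Lemma lqn_scal n s x : lqn_norm q n (seq_scal s x) = Rabs s * lqn_norm q n x.
Proof.
  unfold lqn_norm, seq_scal.
  rewrite (sumR_ext n _ (fun i => pw (Rabs s) q * pw (Rabs (x i)) q)).
  2:{ intros. rewrite Rabs_mult, pw_mult; auto; apply Rabs_pos. }
  rewrite sumR_scal, pw_mult. rewrite pw_inv. auto. apply Rabs_pos. lra. apply pw_nonneg.
  apply sumR_pw_nonneg.
Qed.

Lemma lqn_tri n x y : lqn_norm q n (seq_add x y) <= 2 * (lqn_norm q n x + lqn_norm q n y).
Proof.
  set (a := lqn_norm q n x). set (b := lqn_norm q n y).
  assert (Ha : 0 <= a) by apply lqn_nonneg. assert (Hb : 0 <= b) by apply lqn_nonneg.
  unfold lqn_norm at 1.
  rewrite <- (pw_inv (2*(a+b)) q) by lra. apply pw_le. apply Rdiv_lt_0_compat; lra.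
  split. apply sumR_pw_nonneg.
  apply Rle_trans with (pw 2 q * (sumR n (fun i => pw (Rabs (x i)) q) + sumR n (fun i => pw (Rabs (y i)) q))).
  rewrite <- sumR_plus, <- sumR_scal. apply sumR_le. intros. unfold seq_add. apply pw_add_le; lra.
  rewrite pw_mult by lra. apply Rmult_le_compat_l. apply pw_nonneg.
  rewrite <- !lqn_pow. fold a b. apply pw_superadd; lra.
Qed.

Lemma lqn_zero n : lqn_norm q n (fun _ => 0) = 0.
Proof. unfold lqn_norm. rewrite (sumR_ext n _ (fun i => 0 * 0)). rewrite sumR_scal, Rmult_0_l, pw_0; auto.
  intros. rewrite Rabs_R0, pw_0; ring. Qed.

Lemma sumR_le_Series n w : (forall i, 0 <= w i) -> ex_series w -> sumR n w <= Series w.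
Proof.
  intros Hw [l Hl]. rewrite (is_series_unique w l Hl).
  assert (Hl' : is_lim_seq (sum_n w) l) by exact Hl.
  destruct n. simpl.
  - assert (Rbar_le (sum_n w O) l). { apply is_lim_seq_le_loc with (fun _ => sum_n w O) (sum_n w).
      exists O. intros k _. rewrite <- !sumR_sum_n. apply sumR_mono; auto; lia.
      apply is_lim_seq_const. auto. }
    simpl in H. rewrite sum_O in H. specialize (Hw O). lra.
  - rewrite sumR_sum_n.
    assert (Rbar_le (sum_n w n) l). { apply is_lim_seq_le_loc with (fun _ => sum_n w n) (sum_n w).
      exists n. intros k Hk. rewrite <- !sumR_sum_n. apply sumR_mono; auto; lia.
      apply is_lim_seq_const. auto. }
    simpl in H. auto.
Qed.

Lemma lqn_le_lq n x : lq_mem q x -> lqn_norm q n x <= lq_norm q x.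
Proof. intros H. unfold lqn_norm, lq_norm. apply pw_le. apply Rdiv_lt_0_compat; lra.
  split. apply sumR_pw_nonneg. apply sumR_le_Series; auto. intros; apply pw_nonneg. Qed.

End NU.

Lemma in_pin_add n x y : in_pin n (seq_add x y) = X_add (in_pin n x) (in_pin n y).
Proof. unfold in_pin, X_add, seq_add. apply functional_extensionality; intro m.
  apply functional_extensionality; intro i. destruct (andb _ _); ring. Qed.

Lemma in_pin_scal n a x : in_pin n (seq_scal a x) = X_scal a (in_pin n x).
Proof. unfold in_pin, X_scal, seq_scal. apply functional_extensionality; intro m.
  apply functional_extensionality; intro i. destruct (andb _ _); ring. Qed.

Lemma in_pin_zero n : in_pin n (fun _ => 0) = (fun _ _ => 0).
Proof. unfold in_pin. apply functional_extensionality; intro m.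
  apply functional_extensionality; intro i. destruct (andb _ _); ring. Qed.

Lemma single_sumR (n : nat) (c : R) m :
  sumR m (fun k => if Nat.eqb k n then c else 0) = if Nat.leb m n then 0 else c.
Proof.
  induction m. reflexivity. simpl sumR. rewrite IHm.
  destruct (Nat.eqb m n) eqn:E. apply Nat.eqb_eq in E. subst.
  rewrite Nat.leb_refl. replace (Nat.leb (S n) n) with false. ring. symmetry; apply Nat.leb_gt; lia.
  apply Nat.eqb_neq in E. destruct (Nat.leb m n) eqn:E2; destruct (Nat.leb (S m) n) eqn:E3; try ring.
  apply Nat.leb_le in E2. apply Nat.leb_gt in E3. lia.
  apply Nat.leb_gt in E2. apply Nat.leb_le in E3. lia.
Qed.

Lemma single_series (n : nat) (c : R) : is_series (fun k => if Nat.eqb k n then c else 0) c.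
Proof.
  change (is_lim_seq (sum_n (fun k => if Nat.eqb k n then c else 0)) c).
  apply (is_lim_seq_incr_n _ n).
  apply is_lim_seq_ext with (fun _ => c). 2: apply is_lim_seq_const.
  intros k. rewrite <- sumR_sum_n, single_sumR. replace (Nat.leb (S (k+n)) n) with false. auto.
  symmetry; apply Nat.leb_gt; lia.
Qed.

Lemma lqn_in_pin q n x m : lqn_norm q m (in_pin n x m) = if Nat.eqb m n then lqn_norm q n x else 0.
Proof.
  unfold lqn_norm, in_pin. destruct (Nat.eqb m n) eqn:E.
  - apply Nat.eqb_eq in E; subst. f_equal. apply sumR_ext. intros i Hi.
    simpl. replace (Nat.ltb i n) with true. reflexivity. symmetry; apply Nat.ltb_lt; auto.
  - rewrite (sumR_ext m _ (fun i => 0 * 0)). rewrite sumR_scal, Rmult_0_l, pw_0; auto.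
    intros. simpl. rewrite Rabs_R0, pw_0; ring.
Qed.

Lemma X_mem_in_pin p q n x : X_mem p q (in_pin n x).
Proof.
  split.
  - intros m i Hi. unfold in_pin. destruct (Nat.eqb m n) eqn:E; simpl; auto.
    apply Nat.eqb_eq in E; subst. replace (Nat.ltb i n) with false; auto. symmetry; apply Nat.ltb_ge; auto.
  - exists (pw (lqn_norm q n x) p).
    eapply is_series_ext. 2: apply (single_series n (pw (lqn_norm q n x) p)).
    intros m. simpl. rewrite lqn_in_pin. destruct (Nat.eqb m n); auto. rewrite pw_0; auto.
Qed.

Lemma X_norm_in_pin p q n x : 0 < p -> X_norm p q (in_pin n x) = lqn_norm q n x.
Proof.
  intros Hp. unfold X_norm.
  rewrite (is_series_unique _ (pw (lqn_norm q n x) p)).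
  apply pw_inv. apply pw_nonneg. lra.
  eapply is_series_ext. 2: apply (single_series n (pw (lqn_norm q n x) p)).
  intros m. simpl. rewrite lqn_in_pin. destruct (Nat.eqb m n); auto. rewrite pw_0; auto.
Qed.

Lemma lq_add q x y : 1 < q -> lq_mem q x -> lq_mem q y -> lq_mem q (seq_add x y).
Proof.
  intros Hq Hx Hy. unfold lq_mem, seq_add.
  apply (@ex_series_le R_AbsRing R_CompleteNormedModule _ (fun i => pw 2 q * (pw (Rabs (x i)) q + pw (Rabs (y i)) q))).
  - intros n. change (norm _) with (Rabs (pw (Rabs (x n + y n)) q)).
    rewrite Rabs_pos_eq by apply pw_nonneg. apply pw_add_le; lra.
  - apply (ex_series_ext (fun i => scal (pw 2 q) ((fun i => plus (pw (Rabs (x i)) q) (pw (Rabs (y i)) q)) i))).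
    intros; reflexivity. apply (@ex_series_scal_l R_AbsRing R_NormedModule). apply (@ex_series_plus R_AbsRing R_NormedModule); auto.
Qed.

Lemma lq_scal q s x : lq_mem q x -> lq_mem q (seq_scal s x).
Proof.
  intros Hx. unfold lq_mem, seq_scal.
  apply ex_series_ext with (fun i => pw (Rabs s) q * pw (Rabs (x i)) q).
  intros n. rewrite Rabs_mult, pw_mult; auto; apply Rabs_pos.
  apply (ex_series_ext (fun i => scal (pw (Rabs s) q) ((fun i => pw (Rabs (x i)) q) i))).
  intros; reflexivity. apply (@ex_series_scal_l R_AbsRing R_NormedModule); auto.
Qed.

Definition zero : nat -> R := fun _ => 0.
Definition sub (x y : nat -> R) := seq_add x (seq_scal (-1) y).
Definition pth (x : nat -> R) (t : R) (h : nat -> R) := seq_add x (seq_scal t h).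

Ltac fext := apply functional_extensionality; intro.

Lemma pth_1 x h : pth x 1 h = seq_add x h.
Proof. unfold pth, seq_add, seq_scal; fext; ring. Qed.
Lemma pth_0 x h : pth x 0 h = x.
Proof. unfold pth, seq_add, seq_scal; fext; ring. Qed.
Lemma pth_zero t x : pth zero t x = seq_scal t x.
Proof. unfold pth, zero, seq_add, seq_scal; fext; ring. Qed.
Lemma pth_sub x y : pth x 1 (sub y x) = y.
Proof. unfold pth, sub, seq_add, seq_scal; fext; ring. Qed.
Lemma sub_pth x t h : sub (pth x t h) x = seq_scal t h.
Proof. unfold pth, sub, seq_add, seq_scal; fext; ring. Qed.
Lemma pth_plus x t s h : pth x (t+s) h = seq_add (pth x t h) (seq_scal s h).
Proof. unfold pth, seq_add, seq_scal; fext; ring. Qed.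
Lemma sub_zero x : sub x zero = x.
Proof. unfold sub, zero, seq_add, seq_scal; fext; ring. Qed.

Lemma MVT01 (g g' : R -> R) B : (forall t, derivable_pt_lim g t (g' t)) ->
  (forall t, 0 <= t <= 1 -> Rabs (g' t) <= B) -> Rabs (g 1 - g 0) <= B.
Proof.
  intros Hd Hb. destruct (MVT_cor2 g g' 0 1) as [c [Hc Hc2]]. lra. intros; apply Hd.
  rewrite Hc. replace (1-0) with 1 by ring. rewrite Rmult_1_r. apply Hb; lra.
Qed.

Section Main.
Variables (p q : R) (F : (nat->nat->R) -> R) (k : nat)
  (D : nat -> (nat->nat->R) -> (nat -> nat->nat->R) -> R) (M alpha : R).
Hypothesis Hp : 1 < p.
Hypothesis Hq : 1 < q.
Hypothesis Halpha : 0 < alpha.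
Hypothesis HM : 0 < M.
Hypothesis HFD : frechet_derivatives (nat -> nat -> R) (X_mem p q) X_add X_scal (X_norm p q) k F D.
Hypothesis HH : forall y z hs, X_mem p q y -> X_mem p q z -> args_in (nat->nat->R) (X_mem p q) k hs ->
  Rabs (D k y hs - D k z hs) <= M * pw (X_norm p q (X_add y (X_scal (-1) z))) alpha
     * prodR k (fun i => X_norm p q (hs i)).

Definition E n j x hs := D j (in_pin n x) (fun i => in_pin n (hs i)).
Notation nu n x := (lqn_norm q n x).
Notation PP n j hs := (prodR j (fun i => lqn_norm q n (hs i))).

Lemma args_pin n j (hs : nat -> nat -> R) : args_in (nat->nat->R) (X_mem p q) j (fun i => in_pin n (hs i)).
Proof. intros i _. apply X_mem_in_pin. Qed.

Lemma Xn n x : X_norm p q (in_pin n x) = nu n x.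
Proof. apply X_norm_in_pin. lra. Qed.

Lemma prod_pin n j hs : prodR j (fun i => X_norm p q (in_pin n (hs i))) = PP n j hs.
Proof. apply prodR_ext. intros; apply Xn. Qed.

Lemma PP_nonneg n j hs : 0 <= PP n j hs.
Proof. apply prodR_nonneg; intros; apply lqn_nonneg. Qed.

Lemma E0 n x hs : E n 0 x hs = F (in_pin n x).
Proof. unfold E. destruct HFD as [H0 _]. apply H0. apply X_mem_in_pin. Qed.

Lemma E_dep n j x hs hs' : (j <= k)%nat -> (forall i, (i < j)%nat -> hs i = hs' i) ->
  E n j x hs = E n j x hs'.
Proof. intros Hj Hh. unfold E. destruct HFD as [_ [HB _]].
  destruct (HB j (in_pin n x) Hj (X_mem_in_pin p q n x)) as [H _].
  apply H. intros i Hi. rewrite Hh; auto. Qed.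

Lemma supd_pin n (hs : nat -> nat -> R) i w :
  (fun m => in_pin n (supd hs i w m)) = supd (fun m => in_pin n (hs m)) i (in_pin n w).
Proof. fext. unfold supd. destruct (Nat.eqb _ _); auto. Qed.

Lemma scons_pin n h (hs : nat -> nat -> R) :
  (fun m => in_pin n (scons h hs m)) = scons (in_pin n h) (fun m => in_pin n (hs m)).
Proof. fext. unfold scons. destruct x; auto. Qed.

Lemma E_add n j x hs i u v : (j <= k)%nat -> (i < j)%nat ->
  E n j x (supd hs i (seq_add u v)) = E n j x (supd hs i u) + E n j x (supd hs i v).
Proof. intros Hj Hi. unfold E. rewrite !supd_pin, in_pin_add. destruct HFD as [_ [HB _]].
  destruct (HB j (in_pin n x) Hj (X_mem_in_pin p q n x)) as [_ [H _]].
  apply H; auto. apply args_pin. apply X_mem_in_pin. apply X_mem_in_pin. Qed.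

Lemma E_scal n j x hs i a u : (j <= k)%nat -> (i < j)%nat ->
  E n j x (supd hs i (seq_scal a u)) = a * E n j x (supd hs i u).
Proof. intros Hj Hi. unfold E. rewrite !supd_pin, in_pin_scal. destruct HFD as [_ [HB _]].
  destruct (HB j (in_pin n x) Hj (X_mem_in_pin p q n x)) as [_ [_ [H _]]].
  apply H; auto. apply args_pin. apply X_mem_in_pin. Qed.

Lemma supd_scons {V} (h : V) hs w : supd (scons h hs) 0 w = scons w hs.
Proof. fext. unfold supd, scons. destruct x; auto. Qed.

Lemma E_scons_scal n j x h hs s : (S j <= k)%nat ->
  E n (S j) x (scons (seq_scal s h) hs) = s * E n (S j) x (scons h hs).
Proof. intros Hj. rewrite <- (supd_scons h hs (seq_scal s h)). rewrite E_scal; auto; try lia.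
  rewrite supd_scons; auto. Qed.

Lemma E_bnd0 j : (j <= k)%nat -> exists C, 0 <= C /\ forall n hs, Rabs (E n j zero hs) <= C * PP n j hs.
Proof.
  intros Hj. destruct HFD as [_ [HB _]].
  assert (Hz : X_mem p q (in_pin 0 zero)) by apply X_mem_in_pin.
  destruct (HB j (in_pin 0 zero) Hj Hz) as [_ [_ [_ [C HC]]]].
  exists (Rmax C 0). split. apply Rmax_r. intros n hs. unfold E.
  assert (E1 : in_pin n zero = in_pin 0 zero) by (unfold zero; rewrite !in_pin_zero; auto).
  rewrite E1. eapply Rle_trans. apply HC. apply args_pin. cbv beta. rewrite prod_pin.
  apply Rmult_le_compat_r. apply PP_nonneg. apply Rmax_l.
Qed.

Lemma E_fre n j x : (j < k)%nat -> forall eps, 0 < eps -> exists delta, 0 < delta /\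
  forall h, nu n h < delta -> forall hs,
  Rabs (E n j (seq_add x h) hs - E n j x hs - E n (S j) x (scons h hs)) <= eps * nu n h * PP n j hs.
Proof.
  intros Hj eps He. destruct HFD as [_ [_ HF]].
  destruct (HF j (in_pin n x) Hj (X_mem_in_pin p q n x) eps He) as [d [Hd H]].
  exists d; split; auto. intros h Hh hs. unfold E. rewrite in_pin_add, scons_pin.
  rewrite <- (Xn n h), <- (prod_pin n j hs). apply H. apply X_mem_in_pin. rewrite Xn; auto. apply args_pin.
Qed.

Lemma E_hol n y z hs : Rabs (E n k y hs - E n k z hs) <= M * pw (nu n (sub y z)) alpha * PP n k hs.
Proof.
  unfold E. rewrite <- Xn, <- prod_pin. unfold sub. rewrite in_pin_add, in_pin_scal.
  apply HH; try apply X_mem_in_pin. apply args_pin.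
Qed.

Lemma E_deriv n j x h hs t : (j < k)%nat ->
  derivable_pt_lim (fun t => E n j (pth x t h) hs) t (E n (S j) (pth x t h) (scons h hs)).
Proof.
  intros Hj eps Heps. set (y := pth x t h). set (L := nu n h). set (P := PP n j hs).
  assert (HL : 0 <= L) by apply lqn_nonneg. assert (HP : 0 <= P) by apply PP_nonneg.
  set (e' := eps / (2 * (L * P + 1))).
  assert (He' : 0 < e') by (unfold e'; apply Rdiv_lt_0_compat; nra).
  destruct (E_fre n j y Hj e' He') as [d [Hd H]].
  assert (Hd' : 0 < d / (L+1)) by (apply Rdiv_lt_0_compat; lra).
  exists (mkposreal _ Hd'). intros s Hs0 Hs. simpl in Hs.
  rewrite pth_plus. fold y.
  assert (Hns : nu n (seq_scal s h) < d).
  { pose proof (Rabs_pos s). unfold Rdiv in Hs. rewrite lqn_scal by lra. fold L. apply Rle_lt_trans with (Rabs s * (L+1)). nra.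
    apply Rmult_lt_reg_r with (/(L+1)). apply Rinv_0_lt_compat; lra.
    rewrite Rmult_assoc, Rinv_r by lra. lra. }
  specialize (H _ Hns hs). rewrite E_scons_scal in H by lia. rewrite lqn_scal in H by lra. fold L P in H.
  set (A := E n j (seq_add y (seq_scal s h)) hs) in *. set (B := E n j y hs) in *.
  set (Cc := E n (S j) y (scons h hs)) in *.
  assert (Hs' : 0 < Rabs s) by (apply Rabs_pos_lt; auto).
  replace ((A - B)/s - Cc) with ((A - B - s * Cc) / s) by (field; auto).
  unfold Rdiv. rewrite Rabs_mult, Rabs_inv.
  apply Rle_lt_trans with (e' * L * P).
  - apply Rmult_le_reg_r with (Rabs s); auto. rewrite Rmult_assoc, Rinv_l by lra.
    replace (e' * L * P * Rabs s) with (e' * (Rabs s * L) * P) by ring. lra.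
  - unfold e'. apply Rle_lt_trans with (eps / 2). 2: lra.
    unfold Rdiv. rewrite Rinv_mult. 
    replace (eps * (/ 2 * / (L * P + 1)) * L * P) with (eps / 2 * ((L*P) / (L*P+1))) by (field; nra).
    assert ((L*P)/(L*P+1) <= 1). { apply Rmult_le_reg_r with (L*P+1). nra. unfold Rdiv.
      rewrite Rmult_assoc, Rinv_l by nra. nra. }
    nra.
Qed.

Lemma PP_scons n j h hs : PP n (S j) (scons h hs) = nu n h * PP n j hs.
Proof. apply (prodR_scons (fun v => nu n v)). Qed.

Lemma U1 : forall d j, (j <= k)%nat -> (k - j = d)%nat -> forall R, 0 <= R ->
  exists C, 0 <= C /\ forall n x hs, nu n x <= R -> Rabs (E n j x hs) <= C * PP n j hs.
Proof.
  induction d; intros j Hj Hd R HR.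
  - assert (j = k) by lia. subst j.
    destruct (E_bnd0 k (Nat.le_refl k)) as [C0 [HC0 H0]].
    exists (C0 + M * pw R alpha). split. pose proof (pw_nonneg R alpha). nra.
    intros n x hs Hx. pose proof (E_hol n x zero hs) as H1. rewrite sub_zero in H1.
    specialize (H0 n hs). pose proof (PP_nonneg n k hs).
    assert (pw (nu n x) alpha <= pw R alpha) by (apply pw_le; auto; split; auto; apply lqn_nonneg).
    assert (Rabs (E n k x hs) <= Rabs (E n k zero hs) + Rabs (E n k x hs - E n k zero hs)).
    { replace (E n k x hs) with (E n k zero hs + (E n k x hs - E n k zero hs)) at 1 by ring. apply Rabs_triang. }
    assert (M * pw (nu n x) alpha * PP n k hs <= M * pw R alpha * PP n k hs).
    { apply Rmult_le_compat_r; auto. apply Rmult_le_compat_l; lra. }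
    nra.
  - assert (Hj' : (S j <= k)%nat) by lia.
    destruct (IHd (S j) Hj' ltac:(lia) R HR) as [C1 [HC1 H1]].
    destruct (E_bnd0 j Hj) as [C0 [HC0 H0]].
    exists (C0 + C1 * R). split. nra.
    intros n x hs Hx.
    assert (Hm : Rabs (E n j (pth zero 1 x) hs - E n j (pth zero 0 x) hs) <= C1 * R * PP n j hs).
    { apply (MVT01 (fun t => E n j (pth zero t x) hs) (fun t => E n (S j) (pth zero t x) (scons x hs))).
      intros t. apply E_deriv. lia.
      intros t Ht. eapply Rle_trans. apply H1.
      rewrite pth_zero, lqn_scal by lra. rewrite Rabs_pos_eq by lra.
      pose proof (lqn_nonneg q n x). nra.
      rewrite PP_scons. pose proof (PP_nonneg n j hs). pose proof (lqn_nonneg q n x).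
      replace (C1 * (nu n x * PP n j hs)) with ((C1 * nu n x) * PP n j hs) by ring.
      apply Rmult_le_compat_r; auto. apply Rmult_le_compat_l; auto. }
    rewrite pth_zero in Hm. rewrite pth_zero in Hm.
    assert (E1 : seq_scal 1 x = x) by (unfold seq_scal; fext; ring).
    assert (E2 : seq_scal 0 x = zero) by (unfold seq_scal, zero; fext; ring).
    rewrite E1, E2 in Hm. specialize (H0 n hs). pose proof (PP_nonneg n j hs).
    assert (Rabs (E n j x hs) <= Rabs (E n j zero hs) + Rabs (E n j x hs - E n j zero hs)).
    { replace (E n j x hs) with (E n j zero hs + (E n j x hs - E n j zero hs)) at 1 by ring. apply Rabs_triang. }
    nra.
Qed.

Lemma U1' j : (j <= k)%nat -> forall R, 0 <= R ->
  exists C, 0 <= C /\ forall n x hs, nu n x <= R -> Rabs (E n j x hs) <= C * PP n j hs.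
Proof. intros Hj. apply (U1 (k - j)); auto. Qed.

Lemma LIP j : (j <= k)%nat -> forall R, 0 <= R -> forall eps, 0 < eps -> exists delta, 0 < delta /\
  forall n x y hs, nu n x <= R -> nu n (sub y x) < delta ->
  Rabs (E n j y hs - E n j x hs) <= eps * PP n j hs.
Proof.
  intros Hj R HR eps He. destruct (Nat.eq_dec j k) as [->|Hne].
  - exists (pw (eps / M) (1/alpha)). split. apply pw_gt0. apply Rdiv_lt_0_compat; lra.
    intros n x y hs Hx Hy. eapply Rle_trans. apply E_hol.
    apply Rmult_le_compat_r. apply PP_nonneg.
    assert (pw (nu n (sub y x)) alpha <= pw (pw (eps / M) (1 / alpha)) alpha).
    { apply pw_le; auto. split. apply lqn_nonneg. lra. }
    rewrite pw_inv' in H by (try lra; apply Rlt_le, Rdiv_lt_0_compat; lra).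
    apply Rle_trans with (M * (eps / M)). apply Rmult_le_compat_l; lra. right; field; lra.
  - assert (Hj' : (S j <= k)%nat) by lia.
    destruct (U1' (S j) Hj' (2*(R+1)) ltac:(lra)) as [C1 [HC1 H1]].
    exists (Rmin 1 (eps / (C1 + 1))). split. apply Rmin_pos. lra. apply Rdiv_lt_0_compat; lra.
    intros n x y hs Hx Hy. set (z := sub y x) in *.
    assert (Hz1 : nu n z <= 1) by (pose proof (Rmin_l 1 (eps/(C1+1))); lra).
    assert (Hz2 : nu n z <= eps / (C1+1)) by (pose proof (Rmin_r 1 (eps/(C1+1))); lra).
    assert (Hm : Rabs (E n j (pth x 1 z) hs - E n j (pth x 0 z) hs) <= eps * PP n j hs).
    { apply (MVT01 (fun t => E n j (pth x t z) hs) (fun t => E n (S j) (pth x t z) (scons z hs))).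
      intros t. apply E_deriv. lia.
      intros t Ht. eapply Rle_trans. apply H1.
      unfold pth. eapply Rle_trans. apply lqn_tri; lra. rewrite lqn_scal by lra.
      rewrite Rabs_pos_eq by lra. pose proof (lqn_nonneg q n z). nra.
      rewrite PP_scons. pose proof (PP_nonneg n j hs). pose proof (lqn_nonneg q n z).
      replace (C1 * (nu n z * PP n j hs)) with ((C1 * nu n z) * PP n j hs) by ring.
      apply Rmult_le_compat_r; auto.
      apply Rle_trans with (C1 * (eps / (C1+1))). apply Rmult_le_compat_l; auto.
      apply Rmult_le_reg_r with (C1+1). lra. unfold Rdiv. 
      replace (C1 * (eps * / (C1 + 1)) * (C1 + 1)) with (C1 * eps) by (field; lra). nra. }
    unfold z in Hm at 1. rewrite pth_sub, pth_0 in Hm. auto.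
Qed.

Lemma UF j : (j < k)%nat -> forall R, 0 <= R -> forall eps, 0 < eps -> exists delta, 0 < delta /\
  forall n x h hs, nu n x <= R -> nu n h < delta ->
  Rabs (E n j (seq_add x h) hs - E n j x hs - E n (S j) x (scons h hs)) <= eps * nu n h * PP n j hs.
Proof.
  intros Hj R HR eps He.
  destruct (LIP (S j) ltac:(lia) R HR eps He) as [d [Hd H]].
  exists d; split; auto. intros n x h hs Hx Hh.
  set (c := E n (S j) x (scons h hs)).
  assert (Hm : Rabs ((E n j (pth x 1 h) hs - 1 * c) - (E n j (pth x 0 h) hs - 0 * c)) <= eps * nu n h * PP n j hs).
  { apply (MVT01 (fun t => E n j (pth x t h) hs - t * c) (fun t => E n (S j) (pth x t h) (scons h hs) - c)).
    - intros t. apply derivable_pt_lim_minus. apply E_deriv; auto.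
      assert (Hd1 : derivable_pt_lim (fun t => t * c) t (1 * c)) by (apply (derivable_pt_lim_scal_right (fun t => t)); apply derivable_pt_lim_id). rewrite Rmult_1_l in Hd1. exact Hd1.
    - intros t Ht. unfold c. eapply Rle_trans. apply H; auto.
      rewrite sub_pth, lqn_scal by lra. rewrite Rabs_pos_eq by lra. pose proof (lqn_nonneg q n h). nra.
      rewrite PP_scons. right; ring. }
  rewrite pth_1, pth_0 in Hm. replace (E n j (seq_add x h) hs - E n j x hs - c) with
   (E n j (seq_add x h) hs - 1 * c - (E n j x hs - 0 * c)) by ring. auto.
Qed.
End Main.

Definition incr (s : nat -> nat) := forall n, (s n < s (S n))%nat.

Lemma incr_lt s : incr s -> forall m n, (m < n)%nat -> (s m < s n)%nat.
Proof. intros H m n Hmn. induction Hmn. apply H. specialize (H m0). lia. Qed.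

Lemma incr_ge s : incr s -> forall n, (n <= s n)%nat.
Proof. intros H n. induction n. lia. specialize (H n). lia. Qed.

Lemma incr_comp s t : incr s -> incr t -> incr (fun n => s (t n)).
Proof. intros Hs Ht n. apply incr_lt; auto. Qed.

Lemma BW_sub (u : nat -> R) (B : R) : (forall n, Rabs (u n) <= B) ->
  exists s, incr s /\ ex_finite_lim_seq (fun n => u (s n)).
Proof.
  intros HB. destruct (Bolzano_Weierstrass u (fun c => -B <= c <= B) (compact_P3 (-B) B)) as [l Hl].
  { intros n. specialize (HB n). apply Rabs_le_between in HB. lra. }
  assert (Hg : forall N m : nat, exists p, (N <= p)%nat /\ Rabs (u p - l) < / INR (S m)).
  { intros N m. assert (Hpos : 0 < / INR (S m)) by (apply Rinv_0_lt_compat, lt_0_INR; lia).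
    destruct (Hl (fun y => Rabs (y - l) < / INR (S m)) N) as [pp [H1 H2]].
    exists (mkposreal _ Hpos). intros y Hy. auto. exists pp; auto. }
  set (g := fun N m => proj1_sig (constructive_indefinite_description _ (Hg N m))).
  assert (Hg1 : forall N m, (N <= g N m)%nat /\ Rabs (u (g N m) - l) < / INR (S m)).
  { intros N m. unfold g. destruct constructive_indefinite_description; auto. }
  set (s := fix s n := match n with O => g O O | S n' => g (S (s n')) (S n') end).
  exists s. split.
  - intros n. simpl. destruct (Hg1 (S (s n)) (S n)). lia.
  - exists l. apply is_lim_seq_Reals. intros eps Heps.
    destruct (archimed (/eps)) as [H1 _].
    exists (Z.to_nat (up (/eps))). intros n Hn. unfold R_dist.
    assert (Hs : Rabs (u (s n) - l) < / INR (S n)).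
    { destruct n; simpl; apply Hg1. }
    eapply Rlt_le_trans. apply Hs.
    assert (/eps < INR (S n)).
    { apply Rlt_le_trans with (IZR (up (/ eps))). lra.
      assert (0 < /eps) by (apply Rinv_0_lt_compat; auto).
      assert (Hz : (0 <= up (/eps))%Z) by (apply le_IZR; lra).
      rewrite <- (Z2Nat.id (up (/eps))) by auto. rewrite <- INR_IZR_INZ. apply le_INR. lia. }
    rewrite <- (Rinv_inv eps). apply Rlt_le, Rinv_lt_contravar. apply Rmult_lt_0_compat.
    apply Rinv_0_lt_compat; auto. apply lt_0_INR; lia. auto.
Qed.

Lemma diagonal (a : nat -> nat -> R) : (forall c, exists B, forall n, Rabs (a c n) <= B) ->
  exists phi, incr phi /\ forall c, ex_finite_lim_seq (fun j => a c (phi j)).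
Proof.
  intros HB.
  assert (Hsel : forall (psi : nat -> nat) c, exists s, incr s /\ ex_finite_lim_seq (fun n => a c (psi (s n)))).
  { intros psi c. destruct (HB c) as [B HB']. apply (BW_sub (fun n => a c (psi n)) B). auto. }
  set (Sel := fun psi c => proj1_sig (constructive_indefinite_description _ (Hsel psi c))).
  assert (HS : forall psi c, incr (Sel psi c) /\ ex_finite_lim_seq (fun n => a c (psi (Sel psi c n)))).
  { intros. unfold Sel. destruct constructive_indefinite_description; auto. }
  set (Psi := fix Psi c := match c with O => Sel (fun n => n) O
                 | S c' => fun n => Psi c' (Sel (Psi c') (S c') n) end).
  assert (Hinc : forall c, incr (Psi c)).
  { induction c; simpl. apply HS. apply incr_comp; auto. apply HS. }
  assert (Hlim : forall c, ex_finite_lim_seq (fun n => a c (Psi c n))).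
  { destruct c; simpl. apply (HS (fun n => n) O). apply HS. }
  assert (Hrange : forall c d n, exists m, Psi (d + c)%nat n = Psi c m).
  { intros c d. induction d; intros n. exists n; auto.
    simpl. destruct (IHd (Sel (Psi (d + c)%nat) (S (d + c)) n)) as [m Hm]. exists m; auto. }
  exists (fun j => Psi j j). split.
  - intros j. simpl. destruct (HS (Psi j) (S j)) as [Hs _].
    pose proof (incr_ge _ Hs (S j)). 
    destruct (Nat.eq_dec (Sel (Psi j) (S j) (S j)) (S j)) as [E|E].
    rewrite E. apply Hinc. apply Nat.lt_trans with (Psi j (S j)). apply Hinc. apply incr_lt; auto. lia.
  - intros c.
    assert (Ht : forall j, exists m, Psi (j + c)%nat (j + c)%nat = Psi c m) by (intros; apply Hrange).
    set (tau := fun j => proj1_sig (constructive_indefinite_description _ (Ht j))).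
    assert (Htau : forall j, Psi (j + c)%nat (j + c)%nat = Psi c (tau j)).
    { intros. unfold tau. destruct constructive_indefinite_description; auto. }
    assert (Hphi : incr (fun j => Psi j j)).
    { intros j. simpl. destruct (HS (Psi j) (S j)) as [Hs _].
      pose proof (incr_ge _ Hs (S j)).
      destruct (Nat.eq_dec (Sel (Psi j) (S j) (S j)) (S j)) as [E|E].
      rewrite E. apply Hinc. apply Nat.lt_trans with (Psi j (S j)). apply Hinc. apply incr_lt; auto. lia. }
    assert (Htinc : incr tau).
    { intros j. pose proof (Hphi (j + c)%nat) as H. cbv beta in H. rewrite Htau in H.
      change (S (j + c)) with (S j + c)%nat in H. rewrite Htau in H.
      destruct (Nat.lt_ge_cases (tau j) (tau (S j))) as [h|h]; auto.
      destruct (Nat.eq_dec (tau j) (tau (S j))) as [e|e]. rewrite e in H. lia.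
      assert (Psi c (tau (S j)) < Psi c (tau j))%nat by (apply incr_lt; auto; lia). lia. }
    destruct (Hlim c) as [l Hl]. exists l.
    apply (is_lim_seq_incr_n _ c).
    apply is_lim_seq_ext with (fun j => a c (Psi c (tau j))).
    intros j. rewrite <- Htau. auto.
    apply (is_lim_seq_subseq (fun n => a c (Psi c n))). apply eventually_subseq; auto. auto.
Qed.

Fixpoint comp (c i : nat) : nat := match i with
  | O => fst (Cantor.of_nat c) | S i' => comp (snd (Cantor.of_nat c)) i' end.

Lemma comp_surj L : forall v : nat -> nat, exists c, forall i, (i < L)%nat -> comp c i = v i.
Proof.
  induction L; intros v. exists O; intros; lia.
  destruct (IHL (fun i => v (S i))) as [c' Hc']. exists (Cantor.to_nat (v O, c')).
  intros i Hi. destruct i; cbn [comp]; rewrite Cantor.cancel_of_to; simpl; auto. apply Hc'; lia.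
Qed.

Definition dns (c : nat) : nat -> R := fun i =>
  if Nat.ltb i (comp c 0) then
    (INR (fst (Cantor.of_nat (comp c (S (S i))))) - INR (snd (Cantor.of_nat (comp c (S (S i)))))) / (INR (comp c 1) + 1)
  else 0.

Lemma IZ_split z : INR (Z.to_nat z) - INR (Z.to_nat (- z)) = IZR z.
Proof. destruct z; simpl. ring. rewrite INR_IPR. unfold IZR. ring. rewrite INR_IPR. unfold IZR. ring. Qed.

Lemma sumR_const n c : sumR n (fun _ => c) = INR n * c.
Proof. induction n. simpl; ring. simpl sumR. rewrite IHn, S_INR. ring. Qed.

Lemma sumR_split f g N n : (N <= n)%nat -> (forall i, (N <= i)%nat -> f i = g i) ->
  sumR n f - sumR N f = sumR n g - sumR N g.
Proof. intros Hn H. induction Hn. ring. simpl. rewrite H by lia. lra. Qed.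

Lemma tail_small a eta : (forall i, 0 <= a i) -> ex_series a -> 0 < eta ->
  exists N, forall n, (N <= n)%nat -> sumR n a - sumR N a <= eta.
Proof.
  intros Ha [l Hl] He. assert (Hl' : is_lim_seq (sum_n a) l) by exact Hl.
  apply is_lim_seq_Reals in Hl'. destruct (Hl' (eta/2)) as [N0 HN0]. lra.
  exists (S N0). intros n Hn. destruct n. lia.
  rewrite !sumR_sum_n. pose proof (HN0 n ltac:(lia)). pose proof (HN0 N0 ltac:(lia)).
  unfold R_dist in *. apply Rabs_def2 in H. apply Rabs_def2 in H0. lra.
Qed.

Section Dense.
Variable q : R.
Hypothesis Hq : 1 < q.

Lemma dns_bnd c : exists R, 0 <= R /\ forall n, lqn_norm q n (dns c) <= R.
Proof.
  exists (pw (sumR (comp c 0) (fun i => pw (Rabs (dns c i)) q)) (1/q)). split. apply pw_nonneg.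
  intros n. unfold lqn_norm. apply pw_le. apply Rdiv_lt_0_compat; lra. split. apply sumR_pw_nonneg.
  apply sumR_zero_from. intros; apply pw_nonneg. intros i Hi. unfold dns.
  replace (Nat.ltb i (comp c 0)) with false. rewrite Rabs_R0, pw_0; auto. symmetry; apply Nat.ltb_ge; auto.
Qed.

Lemma dns_dense x delta : lq_mem q x -> 0 < delta -> exists c, forall n, lqn_norm q n (sub (dns c) x) < delta.
Proof.
  intros Hx Hd. set (T := pw (delta/2) q). assert (HT : 0 < T) by (apply pw_gt0; lra).
  set (a := fun i => pw (Rabs (x i)) q).
  destruct (tail_small a (T/2) ltac:(intros; apply pw_nonneg) Hx ltac:(lra)) as [N HN].
  set (e0 := pw (T / (2 * (INR N + 1))) (1/q)).
  assert (He0 : 0 < e0). { apply pw_gt0. apply Rdiv_lt_0_compat. lra. pose proof (pos_INR N); lra. }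
  destruct (archimed (/e0)) as [Hup _].
  assert (Hie : 0 < /e0) by (apply Rinv_0_lt_compat; auto).
  assert (Hz : (0 <= up (/e0))%Z) by (apply le_IZR; lra).
  set (m := Z.to_nat (up (/e0))).
  assert (Hm : /e0 < INR m + 1).
  { unfold m. rewrite INR_IZR_INZ, Z2Nat.id by auto. lra. }
  set (K := INR m + 1). assert (HK : 0 < K) by (unfold K; pose proof (pos_INR m); lra).
  assert (HKe : /K <= e0).
  { rewrite <- (Rinv_inv e0). apply Rlt_le, Rinv_lt_contravar; auto. apply Rmult_lt_0_compat; auto. }
  set (z := fun i => up (x i * K)).
  set (v := fun j => match j with O => N | S O => m
             | S (S i) => Cantor.to_nat (Z.to_nat (z i), Z.to_nat (- z i)) end).
  destruct (comp_surj (S (S N)) v) as [c Hc].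
  exists c. intros n.
  assert (Hc0 : comp c 0 = N) by (apply Hc; lia).
  assert (Hc1 : comp c 1 = m) by (apply Hc; lia).
  assert (Hdi : forall i, (i < N)%nat -> dns c i = IZR (z i) / K).
  { intros i Hi. unfold dns. rewrite Hc0, Hc1. replace (Nat.ltb i N) with true by (symmetry; apply Nat.ltb_lt; auto).
    rewrite Hc by lia. unfold v. cbv beta iota. rewrite Cantor.cancel_of_to. cbn [fst snd]. rewrite IZ_split. reflexivity. }
  assert (Hdo : forall i, (N <= i)%nat -> dns c i = 0).
  { intros i Hi. unfold dns. rewrite Hc0. replace (Nat.ltb i N) with false by (symmetry; apply Nat.ltb_ge; auto). auto. }
  set (w := fun i => pw (Rabs (sub (dns c) x i)) q).
  assert (Hw1 : forall i, (i < N)%nat -> w i <= T / (2 * (INR N + 1))).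
  { intros i Hi. unfold w, sub, seq_add, seq_scal. rewrite Hdi by auto.
    destruct (archimed (x i * K)) as [A1 A2]. fold (z i) in A1, A2.
    assert (Habs : Rabs (IZR (z i) / K + -1 * x i) <= e0).
    { apply Rle_trans with (/K); auto. rewrite Rabs_pos_eq.
      apply Rmult_le_reg_r with K; auto. unfold Rdiv.
      replace ((IZR (z i) * / K + -1 * x i) * K) with (IZR (z i) - x i * K) by (field; lra).
      rewrite Rinv_l; lra.
      apply Rmult_le_reg_r with K; auto. unfold Rdiv.
      replace ((IZR (z i) * / K + -1 * x i) * K) with (IZR (z i) - x i * K) by (field; lra). lra. }
    unfold e0 in Habs. eapply Rle_trans. apply pw_le with (y := pw (T / (2 * (INR N + 1))) (1/q)). lra.
    split; auto. apply Rabs_pos. rewrite pw_inv'. lra. left; apply Rdiv_lt_0_compat. lra. pose proof (pos_INR N); lra. lra. }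
  assert (HwN : sumR N w <= T / 2).
  { eapply Rle_trans. apply sumR_le. apply Hw1. rewrite sumR_const.
    apply Rmult_le_reg_r with (2 * (INR N + 1)). pose proof (pos_INR N); lra.
    unfold Rdiv. replace (INR N * (T * / (2 * (INR N + 1))) * (2 * (INR N + 1))) with (INR N * T) by (field; pose proof (pos_INR N); lra).
    pose proof (pos_INR N). nra. }
  assert (Hsum : sumR n w <= T).
  { destruct (Nat.le_gt_cases N n).
    - assert (sumR n w - sumR N w = sumR n a - sumR N a).
      { apply sumR_split; auto. intros i Hi. unfold w, a, sub, seq_add, seq_scal. rewrite Hdo by auto.
        f_equal. rewrite Rplus_0_l, <- Rabs_Ropp. f_equal; ring. }
      specialize (HN n H). lra.
    - pose proof (sumR_mono N n w ltac:(intros; apply pw_nonneg) ltac:(lia)). lra. }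
  unfold lqn_norm. apply Rle_lt_trans with (pw T (1/q)).
  apply pw_le. apply Rdiv_lt_0_compat; lra. split. apply sumR_pw_nonneg. auto.
  unfold T. rewrite pw_inv by lra. lra.
Qed.
End Dense.

Lemma lim_abs_le (u : nat -> R) (l B : R) : is_lim_seq u l -> (forall n, Rabs (u n) <= B) -> Rabs l <= B.
Proof.
  intros H HB. pose proof (is_lim_seq_abs u l H) as Ha.
  pose proof (is_lim_seq_le _ _ _ _ HB Ha (is_lim_seq_const B)). simpl in H0. auto.
Qed.

Lemma cauchy_lim u : ex_lim_seq_cauchy u -> is_lim_seq u (real (Lim_seq u)).
Proof. intros H. apply Lim_seq_correct'. apply ex_lim_seq_cauchy_corr. auto. Qed.

Section Main2.
Variables (p q : R) (F : (nat->nat->R) -> R) (k : nat)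
  (D : nat -> (nat->nat->R) -> (nat -> nat->nat->R) -> R) (M alpha : R).
Hypothesis Hp : 1 < p.
Hypothesis Hq : 1 < q.
Hypothesis Halpha : 0 < alpha.
Hypothesis HM : 0 < M.
Hypothesis HFD : frechet_derivatives (nat -> nat -> R) (X_mem p q) X_add X_scal (X_norm p q) k F D.
Hypothesis HH : forall y z hs, X_mem p q y -> X_mem p q z -> args_in (nat->nat->R) (X_mem p q) k hs ->
  Rabs (D k y hs - D k z hs) <= M * pw (X_norm p q (X_add y (X_scal (-1) z))) alpha
     * prodR k (fun i => X_norm p q (hs i)).

Notation En := (E D).
Notation nu n x := (lqn_norm q n x).
Notation PP n j hs := (prodR j (fun i => lqn_norm q n (hs i))).
Notation PL j hs := (prodR j (fun i => lq_norm q (hs i))).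

Let UFs := UF p q F k D M alpha Hp Hq Halpha HM HFD HH.
Let LIPs := LIP p q F k D M alpha Hp Hq Halpha HM HFD HH.
Let U1s := U1' p q F k D M alpha Hp Hq Halpha HM HFD HH.
Let E0s := E0 p q F k D HFD.
Let E_deps := E_dep p q F k D HFD.
Let E_adds := E_add p q F k D HFD.
Let E_scals := E_scal p q F k D HFD.
Let E_hols := E_hol p q k D M alpha Hp HH.
Let E_sss := E_scons_scal p q F k D HFD.

Lemma lq_norm_nonneg x : 0 <= lq_norm q x.
Proof. apply pw_nonneg. Qed.

Lemma PP_PL n j hs : (forall i, (i < j)%nat -> lq_mem q (hs i)) -> PP n j hs <= PL j hs.
Proof. intros H. apply prodR_le. intros i Hi. split. apply lqn_nonneg. apply lqn_le_lq; auto. Qed.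

Lemma PL_nonneg j hs : 0 <= PL j hs.
Proof. apply prodR_nonneg. intros; apply lq_norm_nonneg. Qed.

Lemma E0_indep n x hs hs' : En n 0 x hs = En n 0 x hs'.
Proof. apply E_deps. lia. intros; lia. Qed.

Lemma exists_phi : exists phi, incr phi /\ (forall j, (0 < phi j)%nat) /\
  forall c, ex_lim_seq_cauchy (fun j => En (phi j) 0 (dns c) (fun _ => zero)).
Proof.
  destruct (diagonal (fun c n => En n 0 (dns c) (fun _ => zero))) as [phi0 [Hi Hc]].
  - intros c. destruct (dns_bnd q Hq c) as [R [HR HRb]].
    destruct (U1s 0 ltac:(lia) R HR) as [C [HC HCb]]. exists C. intros n.
    pose proof (HCb n (dns c) (fun _ => zero) (HRb n)) as H. simpl in H. lra.
  - exists (fun j => phi0 (S j)). split; [|split].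
    + intros j. apply Hi.
    + intros j. pose proof (incr_ge _ Hi (S j)). lia.
    + intros c. apply ex_lim_seq_cauchy_corr. destruct (Hc c) as [l Hl]. exists l.
      apply (is_lim_seq_incr_1 (fun j => En (phi0 j) 0 (dns c) (fun _ => zero))). auto.
Qed.

Variable phi : nat -> nat.
Hypothesis Hphi : forall c, ex_lim_seq_cauchy (fun j => En (phi j) 0 (dns c) (fun _ => zero)).

Lemma CONV0 x hs : lq_mem q x -> ex_lim_seq_cauchy (fun m => En (phi m) 0 x hs).
Proof.
  intros Hx eps. set (R := lq_norm q x).
  assert (He3 : 0 < eps / 3) by (destruct eps; simpl; lra).
  destruct (LIPs 0 ltac:(lia) R (lq_norm_nonneg x) (eps/3) He3) as [d [Hd Hl]].
  destruct (dns_dense q Hq x d Hx Hd) as [c Hc].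
  destruct (Hphi c (mkposreal _ He3)) as [N HN]. simpl in HN.
  exists N. intros n m Hn Hm.
  assert (A : forall t, Rabs (En t 0 (dns c) hs - En t 0 x hs) <= eps/3).
  { intros t. eapply Rle_trans. apply Hl. apply lqn_le_lq; auto; lra. apply Hc. simpl; lra. }
  specialize (HN n m Hn Hm). rewrite (E0_indep _ _ (fun _ => zero) hs), (E0_indep (phi m) _ (fun _ => zero) hs) in HN.
  pose proof (A (phi n)). pose proof (A (phi m)).
  apply Rabs_le_between in H. apply Rabs_le_between in H0. apply Rabs_def2 in HN.
  apply Rabs_def1; lra.
Qed.

Lemma scons_eta {V} (hs : nat -> V) : forall i, scons (hs O) (fun i => hs (S i)) i = hs i.
Proof. intros [|i]; reflexivity. Qed.

Lemma CONV : forall j, (j <= k)%nat -> forall x hs, lq_mem q x -> (forall i, (i < j)%nat -> lq_mem q (hs i)) ->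
  ex_lim_seq_cauchy (fun m => En (phi m) j x hs).
Proof.
  induction j; intros Hj x hs Hx Hhs.
  - apply CONV0; auto.
  - set (h := hs O). set (tl := fun i => hs (S i)).
    assert (Eh : forall n, En n (S j) x hs = En n (S j) x (scons h tl)).
    { intros n. apply E_deps; auto. intros i _. symmetry. apply scons_eta. }
    assert (Hh : lq_mem q h) by (apply Hhs; lia).
    assert (Htl : forall i, (i < j)%nat -> lq_mem q (tl i)) by (intros; apply Hhs; lia).
    intros eps. set (R := lq_norm q x). set (L := lq_norm q h). set (P := PL j tl).
    assert (HL : 0 <= L) by apply lq_norm_nonneg. assert (HP : 0 <= P) by apply PL_nonneg.
    set (e1 := eps / (4 * (L * P + 1))).
    assert (He1 : 0 < e1) by (unfold e1; destruct eps; simpl; apply Rdiv_lt_0_compat; nra).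
    destruct (UFs j ltac:(lia) R (lq_norm_nonneg x) e1 He1) as [d [Hd HU]].
    set (s := d / (2 * (L + 1))). assert (Hs : 0 < s) by (unfold s; apply Rdiv_lt_0_compat; lra).
    assert (HsL : s * L < d).
    { unfold s. apply Rle_lt_trans with (d/2). apply Rmult_le_reg_r with (2*(L+1)). lra.
      unfold Rdiv. replace (d * / (2 * (L + 1)) * L * (2 * (L + 1))) with (d * L) by (field; lra).
      replace (d * / 2 * (2 * (L + 1))) with (d * (L+1)) by field. nra. lra. }
    set (xs := seq_add x (seq_scal s h)).
    assert (Hxs : lq_mem q xs) by (apply lq_add; auto; apply lq_scal; auto).
    set (Q := fun n => (En n j xs tl - En n j x tl) / s).
    assert (HQ : forall n, Rabs (En n (S j) x hs - Q n) <= eps / 4).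
    { intros n. rewrite Eh.
      assert (Hnu : nu n (seq_scal s h) <= s * L).
      { rewrite lqn_scal by lra. rewrite Rabs_pos_eq by lra. apply Rmult_le_compat_l. lra. apply lqn_le_lq; auto. }
      assert (Hnu2 : nu n (seq_scal s h) < d) by lra.
      pose proof (HU n x (seq_scal s h) tl ltac:(apply lqn_le_lq; auto; lra) Hnu2) as H1.
      rewrite E_sss in H1 by lia. fold xs in H1.
      assert (HPP : PP n j tl <= P) by (apply PP_PL; auto).
      assert (B1 : e1 * nu n (seq_scal s h) * PP n j tl <= e1 * (s * L) * P).
      { apply Rmult_le_compat. pose proof (lqn_nonneg q n (seq_scal s h)); nra. apply prodR_nonneg; intros; apply lqn_nonneg.
        apply Rmult_le_compat_l; lra. auto. }
      unfold Q. replace (En n (S j) x (scons h tl) - (En n j xs tl - En n j x tl) / s) with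
        (- (En n j xs tl - En n j x tl - s * En n (S j) x (scons h tl)) / s) by (field; lra).
      unfold Rdiv. rewrite Rabs_mult, Rabs_Ropp, Rabs_inv, (Rabs_pos_eq s) by lra.
      apply Rmult_le_reg_r with s; auto. rewrite Rmult_assoc, Rinv_l, Rmult_1_r by lra.
      apply Rle_trans with (e1 * (s * L) * P). lra.
      assert (Ee : e1 * (s * L) * P = eps / 4 * s * ((L*P) / (L*P+1))) by (unfold e1; field; nra). rewrite Ee.
      assert ((L*P)/(L*P+1) <= 1). { apply Rmult_le_reg_r with (L*P+1). nra. unfold Rdiv.
        rewrite Rmult_assoc, Rinv_l by nra. nra. }
      assert (0 <= eps / 4 * s) by (apply Rmult_le_pos; [destruct eps; simpl; lra | lra]).
      apply Rle_trans with (eps / 4 * s * 1). apply Rmult_le_compat_l; auto. lra. }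
    assert (He2 : 0 < eps * s / 4) by (destruct eps; simpl; nra).
    destruct (IHj ltac:(lia) xs tl Hxs Htl (mkposreal _ He2)) as [N1 HN1].
    destruct (IHj ltac:(lia) x tl Hx Htl (mkposreal _ He2)) as [N2 HN2].
    simpl in HN1, HN2.
    exists (max N1 N2). intros n m Hn Hm.
    specialize (HN1 n m ltac:(lia) ltac:(lia)). specialize (HN2 n m ltac:(lia) ltac:(lia)).
    assert (HQQ : Rabs (Q (phi n) - Q (phi m)) < eps / 2).
    { unfold Q. replace ((En (phi n) j xs tl - En (phi n) j x tl) / s - (En (phi m) j xs tl - En (phi m) j x tl) / s)
        with (((En (phi n) j xs tl - En (phi m) j xs tl) - (En (phi n) j x tl - En (phi m) j x tl)) / s) by (field; lra).
      unfold Rdiv. rewrite Rabs_mult, Rabs_inv, (Rabs_pos_eq s) by lra.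
      apply Rmult_lt_reg_r with s; auto. rewrite Rmult_assoc, Rinv_l, Rmult_1_r by lra.
      eapply Rle_lt_trans. apply Rabs_triang. rewrite Rabs_Ropp. 
      apply Rlt_le_trans with (eps * s / 4 + eps * s / 4). apply Rplus_lt_compat; auto. right; field. }
    pose proof (HQ (phi n)). pose proof (HQ (phi m)).
    apply Rabs_le_between in H. apply Rabs_le_between in H0. apply Rabs_def2 in HQQ.
    apply Rabs_def1; lra.
Qed.

Definition Dstar (j : nat) (x : nat -> R) (hs : nat -> nat -> R) : R :=
  real (Lim_seq (fun m => En (phi m) j x hs)).

Lemma Dlim j x hs : (j <= k)%nat -> lq_mem q x -> (forall i, (i < j)%nat -> lq_mem q (hs i)) ->
  is_lim_seq (fun m => En (phi m) j x hs) (Dstar j x hs).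
Proof. intros. apply cauchy_lim. apply CONV; auto. Qed.

Lemma args_supd hs i w j : (forall i', (i' < j)%nat -> lq_mem q (hs i')) -> lq_mem q w ->
  forall i', (i' < j)%nat -> lq_mem q (supd hs i w i').
Proof. intros H Hw i' Hi'. unfold supd. destruct (Nat.eqb i' i); auto. Qed.

Lemma smooth_star (r : R) : INR k < r <= INR (S k) -> alpha = r - INR k ->
  smooth_lq q r (fun x => Dstar 0 x (fun _ => zero)).
Proof.
  intros Hr Ha. exists k, Dstar, M. split; auto. split; [|split; auto].
  - split; [|split].
    + intros x hs Hx. unfold Dstar. f_equal. apply Lim_seq_ext. intros. apply E0_indep.
    + intros j x Hj Hx. split; [|split; [|split]].
      * intros hs hs' Hh. unfold Dstar. f_equal. apply Lim_seq_ext. intros. apply E_deps; auto.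
      * intros hs i u v Hhs Hi Hu Hv.
        assert (L1 := Dlim j x (supd hs i u) Hj Hx (args_supd hs i u j Hhs Hu)).
        assert (L2 := Dlim j x (supd hs i v) Hj Hx (args_supd hs i v j Hhs Hv)).
        pose proof (is_lim_seq_plus' _ _ _ _ L1 L2) as L3.
        unfold Dstar at 1. rewrite (is_lim_seq_unique _ (Dstar j x (supd hs i u) + Dstar j x (supd hs i v))). reflexivity.
        eapply is_lim_seq_ext. 2: apply L3. intros. simpl. rewrite E_adds; auto.
      * intros hs i a u Hhs Hi Hu.
        assert (L1 := Dlim j x (supd hs i u) Hj Hx (args_supd hs i u j Hhs Hu)).
        pose proof (is_lim_seq_scal_l _ a _ L1) as L3.
        unfold Dstar at 1. rewrite (is_lim_seq_unique _ (a * Dstar j x (supd hs i u))). reflexivity.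
        eapply is_lim_seq_ext. 2: apply L3. intros. simpl. rewrite E_scals; auto.
      * destruct (U1s j Hj (lq_norm q x) (lq_norm_nonneg x)) as [C [HC HCb]].
        exists C. intros hs Hhs. apply (lim_abs_le _ _ _ (Dlim j x hs Hj Hx Hhs)).
        intros n. eapply Rle_trans. apply HCb. apply lqn_le_lq; auto.
        apply Rmult_le_compat_l; auto. apply PP_PL; auto.
    + intros j x Hj Hx eps He.
      destruct (UFs j Hj (lq_norm q x) (lq_norm_nonneg x) eps He) as [d [Hd HU]].
      exists d. split; auto. intros h Hh Hhd hs Hhs.
      assert (Hxh : lq_mem q (seq_add x h)) by (apply lq_add; auto).
      assert (Hsc : forall i, (i < S j)%nat -> lq_mem q (scons h hs i)).
      { intros [|i] Hi; simpl; auto. apply Hhs; lia. }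
      assert (L1 := Dlim j (seq_add x h) hs ltac:(lia) Hxh Hhs).
      assert (L2 := Dlim j x hs ltac:(lia) Hx Hhs).
      assert (L3 := Dlim (S j) x (scons h hs) Hj Hx Hsc).
      pose proof (is_lim_seq_minus' _ _ _ _ (is_lim_seq_minus' _ _ _ _ L1 L2) L3) as L4.
      apply (lim_abs_le _ _ _ L4). intros n. cbv beta.
      eapply Rle_trans. apply HU. apply lqn_le_lq; auto. eapply Rle_lt_trans. apply lqn_le_lq; auto. auto.
      apply Rmult_le_compat. apply Rmult_le_pos; [lra | apply lqn_nonneg]. apply prodR_nonneg; intros; apply lqn_nonneg.
      apply Rmult_le_compat_l. lra. apply lqn_le_lq; auto. apply PP_PL; auto.
  - intros y z hs Hy Hz Hhs. rewrite <- Ha.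
    assert (Hyz : lq_mem q (sub y z)) by (apply lq_add; auto; apply lq_scal; auto).
    assert (L1 := Dlim k y hs ltac:(lia) Hy Hhs).
    assert (L2 := Dlim k z hs ltac:(lia) Hz Hhs).
    apply (lim_abs_le _ _ _ (is_lim_seq_minus' _ _ _ _ L1 L2)). intros n. cbv beta.
    eapply Rle_trans. apply E_hols.
    apply Rmult_le_compat. apply Rmult_le_pos. lra. apply pw_nonneg. apply prodR_nonneg; intros; apply lqn_nonneg.
    apply Rmult_le_compat_l. lra. apply pw_le; auto. split. apply lqn_nonneg. apply lqn_le_lq; auto.
    apply PP_PL; auto.
Qed.
End Main2.

Theorem proposition3p4 (p q r : R) (F : (nat -> nat -> R) -> R) :
  1 < p -> 1 < q -> 1 < r ->
  smooth_X p q r F ->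
  exists (phi : nat -> nat) (Fstar : (nat -> R) -> R),
    (forall j, (0 < phi j)%nat) /\
    (forall j, (phi j < phi (S j))%nat) /\
    (forall x, lq_mem q x ->
       is_lim_seq (fun j => F (in_pin (phi j) x)) (Fstar x)) /\
    smooth_lq q r Fstar.
Proof.
  intros Hp Hq Hr [k [D [M [Hk [HFD [HM HH]]]]]].
  assert (Halpha : 0 < r - INR k) by lra.
  destruct (exists_phi p q F k D M (r - INR k) Hp Hq Halpha HM HFD HH) as [phi [Hinc [Hpos Hc]]].
  exists phi, (fun x => Dstar D phi 0 x (fun _ => zero)).
  split; auto. split; auto. split.
  - intros x Hx. eapply is_lim_seq_ext. 2: apply (Dlim p q F k D M (r - INR k) Hp Hq Halpha HM HFD HH phi Hc 0 x _ ltac:(lia) Hx).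
    intros n. simpl. apply (E0 p q F k D HFD). intros; lia.
  - apply (smooth_star p q F k D M (r - INR k) Hp Hq Halpha HM HFD HH phi Hc r); auto.
Qed.
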